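(* Let $G$ be a connected bipartite finite simple graph with parts $X$ and $Y$, and let $\mathcal{N}G$ be its normal graph algebra over a field $\mathbb{F}$ of characteristic not $2$. Then $\mathrm{ann}\,G$ is the one-dimensional span $\left\langle \sum_{x\in X}x-\sum_{y\in Y}y\right\rangle$.
   Context: For a finite simple graph $G$ with vertex set $VG$ and edge set $EG$ (edge with endpoints $x,y$ written $[x,y]$), the normal graph algebra $\mathcal{N}G$ is the $\mathbb{F}$-vector space $U_G\oplus\mathfrak{Z}_G$, where $U_G$ has basis $VG$ and $\mathfrak{Z}_G$ has basis $EG$, with commutative bilinear product determined by: for distinct vertices $x,y$, $xy=[x,y]$ if adjacent and $0$ otherwise; $x^2=\sum_{y\sim x}[x,y]$; all products involving an element of $\mathfrak{Z}_G$ are $0$. Equivalently, for $u=\sum_x\theta_x x$, $v=\sum_x\eta_x x$, $uv=\sum_{[x,y]\in EG}(\theta_x+\theta_y)(\eta_x+\eta_y)[x,y]$. The annihilator is $\mathrm{ann}\,G=\{u\in U_G: uv=0\text{ for all }v\in U_G\}$. *)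

(* Defs.v *)
From HB Require Import structures.
From mathcomp Require Import all_boot all_order all_algebra.
Set Implicit Arguments. Unset Strict Implicit. Unset Printing Implicit Defensive.
Import GRing.Theory.
Local Open Scope ring_scope.

Definition simple_graph (T : finType) (e : rel T) : Prop :=
  symmetric e /\ irreflexive e.

Definition connected_graph (T : finType) (e : rel T) : Prop :=
  forall x y : T, connect e x y.

Definition bipartition (T : finType) (e : rel T) (X Y : {set T}) : Prop :=
  [/\ X :&: Y = set0, X :|: Y = setT &
      forall x y, e x y -> (x \in X) && (y \in Y) || (x \in Y) && (y \in X)].

(* U_G : F-vector space with basis VG, elements are coordinate vectors
   u = sum_x u x * x. *)
Notation UG F T := {ffun T -> F} (only parsing).

(* Z_G coordinates: the coefficient of the edge [x,y] is stored at (x,y)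
   (and symmetrically at (y,x)); non-edges carry 0.
   Product: uv = sum_{[x,y] in EG} (u x + u y)(v x + v y) [x,y]. *)
Definition ng_mul (F : fieldType) (T : finType) (e : rel T)
    (u v : UG F T) : {ffun T * T -> F} :=
  [ffun p => if e p.1 p.2 then (u p.1 + u p.2) * (v p.1 + v p.2) else 0].

Definition ann (F : fieldType) (T : finType) (e : rel T) (u : UG F T) : Prop :=
  forall v : UG F T, ng_mul e u v = 0.

Definition alt_vec (F : fieldType) (T : finType) (X Y : {set T}) : UG F T :=
  [ffun z => (z \in X)%:R - (z \in Y)%:R].

(* Main.v *)
Require Import Defs.
From HB Require Import structures.
From mathcomp Require Import all_boot all_order all_algebra.
Import GRing.Theory.
Local Open Scope ring_scope.

Lemma alt_edge (F : fieldType) (T : finType) (e : rel T) (X Y : {set T}) x y :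
  bipartition e X Y -> e x y -> alt_vec F X Y y = - alt_vec F X Y x.
Proof.
case=> HI HU He Exy.
have nXY z : z \in X -> z \in Y -> False.
  by move=> a b; have := in_set0 z; rewrite -HI inE a b.
rewrite !ffunE.
case/orP: (He _ _ Exy) => /andP[a b].
- have b' : (y \in X) = false by apply/negP => c; exact: nXY y c b.
  have a' : (x \in Y) = false by apply/negP => c; exact: nXY x a c.
  by rewrite a b a' b' /= subr0 sub0r.
- have b' : (y \in Y) = false by apply/negP => c; exact: nXY y b c.
  have a' : (x \in X) = false by apply/negP => c; exact: nXY x c a.
  by rewrite a b a' b' /= subr0 sub0r opprK.
Qed.

Lemma alt_sq (F : fieldType) (T : finType) (X Y : {set T}) z :
  X :&: Y = set0 -> X :|: Y = setT -> alt_vec F X Y z * alt_vec F X Y z = 1.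
Proof.
move=> HI HU.
have nXY : z \in X -> z \in Y -> False.
  by move=> a b; have := in_set0 z; rewrite -HI inE a b.
have : z \in X :|: Y by rewrite HU inE.
rewrite !ffunE inE; case/orP => a.
- have b : (z \in Y) = false by apply/negP => c; exact: nXY a c.
  by rewrite a b subr0 mulr1.
- have b : (z \in X) = false by apply/negP => c; exact: nXY c a.
  by rewrite a b sub0r mulrNN mulr1.
Qed.

Theorem corollary5p4 (F : fieldType) (T : finType) (e : rel T) (X Y : {set T}) :
  ~~ (2%N \in [pchar F]) ->
  simple_graph e -> connected_graph e -> bipartition e X Y ->
  forall u : UG F T, ann e u <-> exists c : F, forall x : T, u x = c * alt_vec F X Y x.
Proof.
move=> _ [Hsym Hirr] Hconn Hbip u; split.
- move=> Hann.
  have Hedge x y : e x y -> u y = - u x.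
    move=> Exy.
    have := congr1 (fun f : {ffun T * T -> F} => f (x, y)) (Hann [ffun z => (z == x)%:R]).
    rewrite !ffunE /= Exy eqxx.
    have -> : (y == x) = false.
      apply/negP => /eqP Hyx; move: Exy; rewrite Hyx Hirr //.
    rewrite addr0 mulr1 => /eqP; rewrite addr_eq0 => /eqP ->; by rewrite opprK.
  case: (pickP (@predT T)) => [z0 _|H0]; last first.
    by exists 0 => x; have := H0 x.
  case: Hbip => [HI HU He].
  pose c := u z0 * alt_vec F X Y z0.
  have Ec : c = u z0 * alt_vec F X Y z0 by [].
  clearbody c.
  have P0 : u z0 = c * alt_vec F X Y z0 by rewrite Ec -mulrA alt_sq // mulr1.
  exists c => x.
  have := Hconn z0 x; case/connectP => p Hp ->.
  clear Ec; elim: p z0 P0 Hp => [|y p IH] z Pz Hp //=.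
  move: Hp => /= /andP[Ezy Hp].
  apply: IH Hp.
  by rewrite (Hedge _ _ Ezy) (@alt_edge F T e X Y _ _ (And3 HI HU He) Ezy) Pz mulrN.
- case=> c Hc v; apply/ffunP => p; rewrite !ffunE.
  case E: (e p.1 p.2) => //.
  by rewrite !Hc (@alt_edge F T e X Y _ _ Hbip E) mulrN addrN mul0r.
Qed.
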